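(* Let $N \ge 1$ be the sample size, $K$ the data dimension and $J$ an integer with $1 \le J < K$. Let $\delta_1 > \delta_2 > \cdots > \delta_K > 0$ be the eigenvalues of the sample variance-covariance matrix ${\bf S}_x = \frac{1}{N}\sum_{i=1}^N {\bf x}_i {\bf x}_i^\prime$ of (mean-centred) data ${\bf x}_1,\ldots,{\bf x}_N \in \mathbb{R}^K$, and let $$\hat{\tau}_{\rm ML} = \frac{1}{K-J}\sum_{j=J+1}^K \delta_j .$$ For $\tau = \sigma^2$ with $0 < \tau < \delta_J$, consider the concentrated codelength $$\mathcal{I}(\tau) = \frac{N(K-J) - KJ}{2}\log \tau + \frac{N}{2\tau}\sum_{j=1}^K \delta_j - \frac{N}{2\tau}\sum_{j=1}^J (\delta_j - \tau) + \frac{K-J+1}{2}\sum_{j=1}^J \log(\delta_j - \tau).$$ Then $\mathcal{I}$ has $(J+1)$ stationary points whose locations are the roots of the degree $n = J+1$ polynomial $$a_n \tau^n + a_{n-1}\tau^{n-1} + \cdots + a_1 \tau + a_0, \qquad (0 < \tau < \delta_J),$$ with coefficients $$a_0 = -\hat{\tau}_{\rm ML}\, e_J,$$ $$a_j = (-1)^{j+1}\left[\hat{\tau}_{\rm ML}\, e_{J-j} + \left(1 - \frac{(j-1)(J-1)}{N(K-J)} - \frac{K(J-j+1)}{N(K-J)}\right) e_{J-j+1}\right], \quad (1 \le j \le J),$$ $$a_n = (-1)^J\left[1 - \frac{J(J-1)}{N(K-J)}\right],$$ where $e_t = e_t(\delta_1,\ldots,\delta_J)$ denotes the $t$-th elementary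 symmetric polynomial in the $J$ variables $\delta_1,\ldots,\delta_J$ (with $e_0 = 1$). The MML estimate $\hat{\sigma}^2_{\rm MML}$ of the residual variance is the stationary point in the domain $0 < \tau < \delta_J$ that yields the smallest value of $\mathcal{I}$, and the MML estimates of the factor lengths are $\hat{\alpha}_j = (\delta_j - \hat{\sigma}^2_{\rm MML})^{1/2}$ for $j = 1,\ldots,J$.
   Context: Setting: the probabilistic PCA model ${\bf x}_i \sim N_K({\bf 0}, {\bf A}{\bf A}^\prime + \sigma^2 {\bf I}_K)$, $i=1,\ldots,N$, with factor load matrix ${\bf A} \in \mathbb{R}^{K\times J}$ having mutually orthogonal columns of lengths $\alpha_1,\ldots,\alpha_J$ and residual variance $\sigma^2>0$. The function $\mathcal{I}(\tau)$ above is the minimum message length (MML87) codelength of this model, up to additive constants, after the factor orientations have been set to the top $J$ eigenvectors of ${\bf S}_x$ and the factor lengths to $\alpha_j^2 = \delta_j - \sigma^2$; it is a function of $\tau=\sigma^2$ only. $\hat{\tau}_{\rm ML}$ is the maximum likelihood estimate of the residual variance. The paper assumes throughout that the eigenvalues of ${\bf S}_x$ are distinct and positive, ordered $\delta_1 > \cdots > \delta_K > 0$. *)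

(* Defs.v *)
From HB Require Import structures.
From mathcomp Require Import all_boot all_order all_algebra.
From mathcomp Require Import all_classical all_reals all_analysis.
Set Implicit Arguments. Unset Strict Implicit. Unset Printing Implicit Defensive.
Import Order.TTheory GRing.Theory Num.Theory.
Import numFieldNormedType.Exports.
Local Open Scope ring_scope.

(* Eigenvalues are indexed 1..K: d 1, ..., d K. *)

Definition esym {R : comNzRingType} (d : nat -> R) (J t : nat) : R :=
  \sum_(s : {set 'I_J} | #|s| == t) \prod_(i in s) d (val i).+1.

Definition sample_cov {R : fieldType} (N K : nat) (x : 'I_N -> 'cV[R]_K)
  : 'M[R]_K := (N%:R)^-1 *: \sum_(i < N) (x i *m (x i)^T).

Definition tau_ML {R : fieldType} (K J : nat) (d : nat -> R) : R :=
  ((K - J)%:R)^-1 * \sum_(J.+1 <= j < K.+1) d j.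

Definition codelen {R : realType} (N K J : nat) (d : nat -> R) (tau : R) : R :=
  ((N * (K - J))%:R - (K * J)%:R) / 2 * ln tau
  + N%:R / (2 * tau) * \sum_(1 <= j < K.+1) d j
  - N%:R / (2 * tau) * \sum_(1 <= j < J.+1) (d j - tau)
  + (K - J + 1)%:R / 2 * \sum_(1 <= j < J.+1) ln (d j - tau).

Definition mml_coef {R : fieldType} (N K J : nat) (d : nat -> R) (j : nat) : R :=
  let tML := tau_ML K J d in
  let D := (N * (K - J))%:R in
  if j == 0%N then - (tML * esym d J J)
  else if j == J.+1 then (-1) ^+ J * (1 - (J * (J - 1))%:R / D)
  else (-1) ^+ j.+1 *
       (tML * esym d J (J - j)
        + (1 - ((j - 1) * (J - 1))%:R / D - (K * (J - j + 1))%:R / D)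
          * esym d J (J - j + 1)).

Definition mml_poly {R : fieldType} (N K J : nat) (d : nat -> R) : {poly R} :=
  \poly_(j < J.+2) mml_coef N K J d j.

Definition stationary {R : realType} (f : R -> R) (tau : R) : Prop :=
  derivable f tau 1 /\ derive1 f tau = 0.

(* Main.v *)
Require Import Defs.
Set Warnings "-notation-overridden -ambiguous-paths -notation-incompatible-prefix -deprecated -parsing -coercions".
From HB Require Import structures.
From mathcomp Require Import all_boot all_order all_algebra.
From mathcomp Require Import all_classical all_reals all_analysis.
From mathcomp Require Import ring lra zify.
Import Order.TTheory GRing.Theory Num.Theory.
Local Open Scope ring_scope.

Lemma deriv_prodX (R : fieldType) (s : seq R) (x : R) :
  all (fun p => x != p) s ->
  (\prod_(p <- s) ('X - p%:P))^`().[x] =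
  (\prod_(p <- s) ('X - p%:P)).[x] * \sum_(p <- s) (x - p)^-1.
Proof.
elim: s => [|a s IH] /=; first by rewrite !big_nil mulr0 -polyC1 derivC horner0.
move=> /andP[ha hs]; rewrite !big_cons derivM hornerD !hornerM IH //.
rewrite derivXsubC hornerXsubC hornerC.
have hxa : x - a != 0 by rewrite subr_eq0.
by field.
Qed.

Definition pseq {R : Type} (d : nat -> R) (J : nat) : seq R :=
  [seq d j | j <- index_iota 1 J.+1].

Lemma size_pseq {R : Type} (d : nat -> R) J : size (pseq d J) = J.
Proof. by rewrite /pseq size_map /index_iota size_iota subSS subn0. Qed.

Lemma coef_q (R : comNzRingType) (d : nat -> R) (J k : nat) :
  (\prod_(p <- pseq d J) ('X - p%:P))`_k =
  if (k <= J)%N then (-1)^+(J - k) * Defs.esym d J (J - k) else 0.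
Proof.
case: ifP => hk; last first.
  rewrite nth_default // size_prod_XsubC size_pseq; lia.
have := @coef_prod_XsubC R (pseq d J) k.
move: (size_pseq d J) => hs.
have hk' : (k <= size (pseq d J))%N by rewrite hs.
move=> /(_ hk') ->.
move: hk'; rewrite hs => _.
congr (_ * _); rewrite /Defs.esym; apply: eq_bigr => I _; apply: eq_bigr => i _.
by rewrite /pseq /index_iota subSS subn0 (nth_map 0%N) ?size_iota // nth_iota // add1n.
Qed.


Lemma lead_q (R : comNzRingType) (d : nat -> R) (J : nat) :
  (\prod_(p <- pseq d J) ('X - p%:P))`_J = 1.
Proof.
have := lead_coef_prod_XsubC (pseq d J) xpredT id.
by rewrite lead_coefE size_prod_XsubC size_pseq.
Qed.

Lemma coefXderiv (R : nzSemiRingType) (p : {poly R}) (i : nat) :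
  (if i == 0%N then 0 else p^`()`_i.-1) = p`_i *+ i.
Proof. by case: i => [|i] /=; rewrite ?mulr0n // coef_deriv. Qed.

Lemma mml_poly_eq (R : fieldType) N K J (d : nat -> R) :
  (1 <= J)%N -> (J < K)%N ->
  (-1)^+J *: mml_poly N K J d =
  (1 - (K * J)%:R / (N * (K - J))%:R) *: ('X * \prod_(p <- pseq d J) ('X - p%:P))
  - tau_ML K J d *: \prod_(p <- pseq d J) ('X - p%:P)
  + ((K - J + 1)%:R / (N * (K - J))%:R) *:
      ('X * ('X * (\prod_(p <- pseq d J) ('X - p%:P))^`())).
Proof.
move=> hJ hK; apply/polyP => i.
rewrite coefZ coef_poly coefD coefB !coefZ !coefXM.
case: i => [|i] /=.
  rewrite /mml_coef /= coef_q /= subn0; ring.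
rewrite coefXderiv.
have [hi|hi|hi] := ltngtP i J.
- rewrite ifT; last by lia.
  rewrite /mml_coef /=.
  have -> : (i.+1 == J.+1) = false by apply/negbTE; rewrite eqSS neq_ltn hi.
  rewrite !coef_q (ltnW hi) hi.
  have [m hJm] : exists m, J = (m + i.+1)%N by exists (J - i.+1)%N; lia.
  subst J.
  have -> : (m + i.+1 - i = m.+1)%N by lia.
  have -> : (m + i.+1 - i.+1 + 1 = m.+1)%N by lia.
  have -> : (m + i.+1 - i.+1 = m)%N by lia.
  have -> : (m + i.+1 - 1 = m + i)%N by lia.
  have -> : (i.+1 - 1 = i)%N by lia.
  have sg : (-1)^+(m + i.+1) * (-1)^+(i.+2) = - (-1)^+m :> R.
    rewrite -exprD (_ : (m + i.+1 + i.+2 = m.+1 + 2 * i.+1)%N); last by lia.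
    by rewrite exprD exprM sqrrN !expr1n mulr1 exprS mulN1r.
  rewrite mulrA sg exprS mulN1r.
  rewrite !natrM !natrD (natrB _ (ltnW hK)) !natrD.
  ring.
- have h1 : (i <= J)%N = false by lia.
  have h2 : (i.+1 <= J)%N = false by lia.
  have h3 : (i.+1 < J.+2)%N = false by lia.
  rewrite h3 !coef_q h1 h2; ring.
- subst i; rewrite ltnSn /mml_coef /= eqxx lead_q.
  rewrite coef_q ltnn mulrA -expr2 sqrr_sign mul1r.
  rewrite !natrM !natrD (natrB _ (ltnW hK)) (natrB _ hJ); ring.
Qed.

Section Deriv.
Variable R : realType.
Implicit Types (f g : R -> R) (x : R).

Lemma dD f g x df dg : is_derive x 1 f df -> is_derive x 1 g dg ->
  is_derive x 1 (fun t => f t + g t) (df + dg).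
Proof. move=> hf hg; exact: is_deriveD. Qed.

Lemma dB f g x df dg : is_derive x 1 f df -> is_derive x 1 g dg ->
  is_derive x 1 (fun t => f t - g t) (df - dg).
Proof. move=> hf hg; exact: is_deriveB. Qed.

Lemma dM f g x df dg : is_derive x 1 f df -> is_derive x 1 g dg ->
  is_derive x 1 (fun t => f t * g t) (f x * dg + g x * df).
Proof. move=> hf hg; exact: is_deriveM. Qed.

Arguments dD {f g x df dg}.
Arguments dB {f g x df dg}.
Arguments dM {f g x df dg}.

Lemma dK (k : R) x : is_derive x 1 (fun _ => k) 0.
Proof. exact: is_derive_cst. Qed.

Lemma dId x : is_derive x 1 (fun t => t) 1.
Proof. exact: is_derive_id. Qed.

Lemma dln_sum (s : seq R) x : all (fun p => x < p) s ->
  is_derive x 1 (fun t => \sum_(p <- s) ln (p - t)) (\sum_(p <- s) (x - p)^-1).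
Proof.
elim: s => [|a s IH] /=.
  have -> : (fun t : R => \sum_(p <- [::]) ln (p - t)) = (fun _ => 0).
    by apply/funext => t; rewrite big_nil.
  by rewrite big_nil => _; exact: dK.
move=> /andP[ha hs].
have -> : (fun t => \sum_(p <- a :: s) ln (p - t)) =
          (fun t => ln (a - t) + \sum_(p <- s) ln (p - t)).
  by apply/funext => t; rewrite big_cons.
rewrite big_cons; apply: dD; last exact: IH.
have h1 : is_derive x 1 (fun t => a - t) (0 - 1) by exact: dB (dK a x) (dId x).
have h2 : is_derive ((fun t => a - t) x) 1 (@ln R) (a - x)^-1.
  by apply: is_derive1_ln; rewrite subr_gt0.
have := @is_derive1_comp R (@ln R) (fun t => a - t) x _ _ h2 h1.
rewrite /comp => h3; apply: is_derive_eq h3 _.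
by rewrite sub0r mulrN1 -invrN opprB.
Qed.

Lemma dinv (k : R) x : x != 0 ->
  is_derive x 1 (fun t => k / (2 * t)) (- k / (2 * x ^+ 2)).
Proof.
move=> hx.
have -> : (fun t : R => k / (2 * t)) = (fun t => k / 2 * t^-1).
  by apply/funext => t; rewrite invfM mulrA.
have h := @is_deriveV R id x 1 1 hx (dId x).
have h' := dM (dK (k/2) x) h.
apply: is_derive_eq h' _.
rewrite mulr0 addr0 /= /GRing.scale /=.
have h2 : (2 : R) != 0 by rewrite pnatr_eq0.
by rewrite mulr1; field.
Qed.


Lemma codelen_fun N K J (d : nat -> R) :
  codelen N K J d = fun t => ((N * (K - J))%:R - (K * J)%:R) / 2 * ln t
   + N%:R / (2 * t) * \sum_(1 <= j < K.+1) d j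
   - N%:R / (2 * t) * (\sum_(1 <= j < J.+1) d j - J%:R * t)
   + (K - J + 1)%:R / 2 * \sum_(p <- pseq d J) ln (p - t).
Proof.
apply/funext => t; rewrite /codelen /pseq big_map sumrB sumr_const_nat subSS subn0.
ring.
Qed.

Lemma aux_eq (A S1 SJ C Sr n j x : R) : x != 0 ->
  A / x + S1 * (- n / (2 * x ^+ 2)) - (n / (2 * x) * (- j) + (SJ - j * x) * (- n / (2 * x ^+ 2))) + C * Sr
  = A / x - n * S1 / (2 * x ^+ 2) + n * (SJ - j * x) / (2 * x ^+ 2) + n * j / (2 * x) + C * Sr.
Proof. move=> hx; have h2 : (2 : R) != 0 by rewrite pnatr_eq0. by field. Qed.

Lemma codelen_derive N K J (d : nat -> R) x : 0 < x -> all (fun p => x < p) (pseq d J) ->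
  is_derive x 1 (codelen N K J d)
   (((N * (K - J))%:R - (K * J)%:R) / 2 / x
    - N%:R * (\sum_(1 <= j < K.+1) d j) / (2 * x ^+ 2)
    + N%:R * (\sum_(1 <= j < J.+1) d j - J%:R * x) / (2 * x ^+ 2)
    + N%:R * J%:R / (2 * x)
    + (K - J + 1)%:R / 2 * \sum_(p <- pseq d J) (x - p)^-1).
Proof.
move=> hx hall; rewrite codelen_fun.
have hx0 : x != 0 by rewrite gt_eqF.
have h1 := dM (dK (((N * (K - J))%:R - (K * J)%:R) / 2) x) (is_derive1_ln hx).
have h2 := dM (dinv N%:R x hx0) (dK (\sum_(1 <= j < K.+1) d j) x).
have h3 := dM (dinv N%:R x hx0) (dB (dK (\sum_(1 <= j < J.+1) d j) x) (dM (dK J%:R x) (dId x))).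
have h4 := dM (dK ((K - J + 1)%:R / 2) x) (dln_sum _ x hall).
have h := dD (dB (dD h1 h2) h3) h4.
apply: is_derive_eq h _.
have h2' : (2 : R) != 0 by rewrite pnatr_eq0.
rewrite !mulr0 !addr0 mulr1 sub0r add0r; refine (aux_eq _ _ _ _ _ _ _ _ hx0).
Qed.

End Deriv.

Theorem theorem1 (R : realType) (N K J : nat) (x : 'I_N -> 'cV[R]_K)
  (d : nat -> R) :
  (1 <= N)%N -> (1 <= J)%N -> (J < K)%N ->
  (forall i, (1 <= i < K)%N -> d i.+1 < d i) -> 0 < d K ->
  char_poly (sample_cov x) = \prod_(1 <= i < K.+1) ('X - (d i)%:P) ->
  forall tau : R, 0 < tau < d J ->
    (stationary (codelen N K J d) tau <-> (mml_poly N K J d).[tau] = 0).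
Proof.
move=> hN hJ hK hdec _ _ tau /andP[ht0 htJ].
have mono : forall j, (1 <= j <= J)%N -> d J <= d j.
  move=> j hj.
  have gen : forall k, (j + k <= J)%N -> d (j + k)%N <= d j.
    elim => [|k IH] hk; first by rewrite addn0 lexx.
    apply: le_trans (IH _); last by lia.
    rewrite addnS; apply/ltW/hdec; lia.
  have -> : J = (j + (J - j))%N by lia.
  apply: gen; lia.
have hall : all (fun p => tau < p) (pseq d J).
  apply/allP => p /mapP [j hj ->]; rewrite mem_index_iota in hj.
  apply: lt_le_trans htJ (mono j _); lia.
have hder := @codelen_derive R N K J d tau ht0 hall.
set q := \prod_(p <- pseq d J) ('X - p%:P).
have hq0 : q.[tau] != 0.
  rewrite /q horner_prod prodf_seq_neq0; apply/allP => p hp /=.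
  rewrite hornerXsubC subr_eq0; apply/eqP => e; move/allP: hall => /(_ p hp).
  by rewrite e ltxx.
have hqd : q^`().[tau] = q.[tau] * \sum_(p <- pseq d J) (tau - p)^-1.
  apply: deriv_prodX; apply/allP => p hp; move/allP: hall => /(_ p hp).
  by move=> h; rewrite lt_eqF.
have hpoly := congr1 (fun p => p.[tau]) (@mml_poly_eq R N K J d hJ hK).
rewrite /= !hornerD hornerN !hornerZ !hornerM !hornerX -/q in hpoly.
move: hder; set Dv := (X in is_derive _ _ _ X) => hder.
have hS : \sum_(1 <= j < K.+1) d j = \sum_(1 <= j < J.+1) d j + \sum_(J.+1 <= j < K.+1) d j.
  by rewrite (big_cat_nat (n:=J.+1)) //; lia.
have ht0' : tau != 0 by rewrite gt_eqF.
have hKJ : (K - J)%:R != 0 :> R by rewrite pnatr_eq0; lia.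
have hN0 : N%:R != 0 :> R by rewrite pnatr_eq0; lia.
have hDn : (N * (K - J))%:R != 0 :> R by rewrite natrM mulf_neq0.
have key : Dv * (2 * tau^+2 * q.[tau]) = (N * (K - J))%:R * ((-1)^+J * (mml_poly N K J d).[tau]).
  rewrite hpoly hqd /Dv /tau_ML hS.
  move: (\sum_(1 <= j < J.+1) d j) (\sum_(J.+1 <= j < K.+1) d j) (\sum_(p <- pseq d J) (tau - p)^-1) (q.[tau]) => SJ St Sr qt.
  rewrite !natrM natrD.
  have h2 : (2 : R) != 0 by rewrite pnatr_eq0.
  rewrite natrM in hDn.
  by field; rewrite hKJ hN0 ht0'.
have hX : 2 * tau^+2 * q.[tau] != 0.
  by rewrite !mulf_neq0 ?expf_neq0 // pnatr_eq0.
have hs : (-1)^+J != 0 :> R by rewrite signr_eq0.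
split.
- case=> _ h0; rewrite derive1E derive_val in h0.
  move: key; rewrite h0 mul0r => /esym /eqP.
  by rewrite !mulf_eq0 (negbTE hDn) (negbTE hs) /= => /eqP.
- move=> h; split; first exact: ex_derive.
  rewrite derive1E derive_val.
  move: key; rewrite h mulr0 mulr0 => /eqP; rewrite mulf_eq0 (negbTE hX) orbF.
  by move/eqP.
Qed.
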